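(* Let $p_1>p_2>\cdots>p_n$ be distinct positive integers. Enumerate the $\binom n2$ pairs $\{i,j\}$ with $p_i>p_j$ as $k=1,\dots,\binom n2$. For pair $k$, set $m_k=(p_i-p_j)/\gcd(p_i,p_j)$ and $A_k=\{0,\frac1{m_k},\dots,\frac{m_k-1}{m_k}\}$. Then the number of distinct sequences in $\{S_c(\mathbf p): c\in[0,1]\}$ equals $$1+\Big|\bigcup_{k=1}^{\binom n2}A_k\Big| \;=\;1+\sum_{k=1}^{\binom n2}(-1)^{k+1}\sum_{1\le i_1<\cdots<i_k\le\binom n2}\gcd(m_{i_1},\dots,m_{i_k}).$$
   Context: Stationary divisor method with cut point $c\in[0,1]$: seats are allocated one at a time. Initially each party $i$ has $a_i=0$ seats; each next seat goes to a party $i$ maximizing $p_i/(a_i+c)$, whose $a_i$ then increases by $1$. Ties are broken in favor of the smallest index. For $c=0$ the convention is that $p_i/0>p_j/0$ whenever $p_i>p_j$, and $p_i/0>p_j/k$ for every $k>0$. $S_c(\mathbf p)$ is the infinite sequence of indices of the parties receiving successive seats. *)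

(* Defs.v *)
From HB Require Import structures.
From mathcomp Require Import all_boot all_order all_algebra.
From mathcomp Require Import reals.
Set Implicit Arguments. Unset Strict Implicit. Unset Printing Implicit Defensive.
Import Order.TTheory GRing.Theory Num.Theory.
Local Open Scope ring_scope.

(* Parties are indexed 0..n-1 (0-based); p : nat -> nat gives their
   populations (only values below n matter); a : nat -> nat gives the
   current number of seats of each party. *)

(* [beats c p a i j]: party i has a strictly larger quotient
   p_i/(a_i+c) than party j, with the convention for a zero denominator:
   p_i/0 > p_j/0 iff p_i > p_j, and p_i/0 > p_j/k for every k > 0. *)
Definition beats {R : realType} (c : R) (p a : nat -> nat) (i j : nat) : bool :=
  let di := (a i)%:R + c in
  let dj := (a j)%:R + c in
  if di == 0 then (if dj == 0 then (p j < p i)%N else true)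
  else if dj == 0 then false
  else (p j)%:R / dj < (p i)%:R / di.

(* the party (among 0..n-1) maximizing the quotient, ties broken in favour
   of the smallest index *)
Definition winner {R : realType} (c : R) (p : nat -> nat) (n : nat)
    (a : nat -> nat) : nat :=
  foldl (fun b j => if beats c p a j b then j else b) 0%N (iota 0 n).

Fixpoint alloc {R : realType} (c : R) (p : nat -> nat) (n : nat) (t : nat)
    : nat -> nat :=
  match t with
  | 0 => fun _ => 0%N
  | t'.+1 =>
      let a := alloc c p n t' in
      let w := winner c p n a in
      fun i => if i == w then (a i).+1 else a i
  end.

Definition S_seq {R : realType} (c : R) (p : nat -> nat) (n : nat) : nat -> nat :=
  fun t => winner c p n (alloc c p n t).

Definition has_card {T : Type} (P : T -> Prop) (N : nat) : Prop :=
  exists f : 'I_N -> T, injective f /\ (forall s, P s <-> exists i, f i = s).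

(* the pairs (i,j), i<j<n, i.e. p_i > p_j (p decreasing), enumerated *)
Definition pairs (n : nat) : seq (nat * nat) :=
  [seq ij <- [seq (i, j) | i <- iota 0 n, j <- iota 0 n] | (ij.1 < ij.2)%N].

Definition mk (p : nat -> nat) (n k : nat) : nat :=
  let ij := nth (0%N, 0%N) (pairs n) k in
  ((p ij.1 - p ij.2) %/ gcdn (p ij.1) (p ij.2))%N.

Definition Ak (p : nat -> nat) (n k : nat) : seq rat :=
  [seq (r%:R / (mk p n k)%:R : rat) | r <- iota 0 (mk p n k)].

Definition A_union (p : nat -> nat) (n : nat) : seq rat :=
  undup (flatten [seq Ak p n k | k <- iota 0 'C(n, 2)]).

(* Main.v *)
Require Import Defs.
From HB Require Import structures.
From mathcomp Require Import all_boot all_order all_algebra.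
From mathcomp Require Import reals ring lra zify.
From Stdlib Require Import FunctionalExtensionality.
Import Order.TTheory GRing.Theory Num.Theory.
Local Open Scope ring_scope.
Set Implicit Arguments. Unset Strict Implicit. Unset Printing Implicit Defensive.


Section Beats.
Variable R : realType.
Implicit Types (c : R).

Definition Bk (e1 e2 : bool) (p1 p2 : nat) (q1 q2 : R) : bool :=
  if e1 then (if e2 then (p2 < p1)%N else true) else if e2 then false else q2 < q1.

Lemma beats_Bk c (p a : nat -> nat) x y : beats c p a x y =
  Bk ((a x)%:R + c == 0) ((a y)%:R + c == 0) (p x) (p y)
     ((p x)%:R / ((a x)%:R + c)) ((p y)%:R / ((a y)%:R + c)).
Proof. by []. Qed.

Lemma Bk_T1 e1 e2 e3 p1 p2 p3 (q1 q2 q3 : R) :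
  Bk e1 e2 p1 p2 q1 q2 -> Bk e2 e3 p2 p3 q2 q3 -> Bk e1 e3 p1 p3 q1 q3.
Proof.
rewrite /Bk; case: e1; case: e2; case: e3 => //.
- by move=> h1 h2; apply: ltn_trans h2 h1.
- by move=> h1 h2; apply: lt_trans h2 h1.
Qed.

Lemma Bk_T2 e1 e2 e3 p1 p2 p3 (q1 q2 q3 : R) :
  Bk e1 e2 p1 p2 q1 q2 -> ~~ Bk e3 e2 p3 p2 q3 q2 -> Bk e1 e3 p1 p3 q1 q3.
Proof.
rewrite /Bk; case: e1; case: e2; case: e3 => //=.
- by rewrite -leqNgt => h1 h2; apply: leq_ltn_trans h2 h1.
- by rewrite -leNgt => h1 h2; apply: le_lt_trans h2 h1.
Qed.

Lemma Bk_asym e1 e2 p1 p2 (q1 q2 : R) :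
  Bk e1 e2 p1 p2 q1 q2 -> ~~ Bk e2 e1 p2 p1 q2 q1.
Proof.
rewrite /Bk; case: e1; case: e2 => //=.
- by rewrite -leqNgt; apply: ltnW.
- by rewrite -leNgt => /ltW.
Qed.

Lemma beats_T1 c (p a : nat -> nat) x y z : beats c p a x y -> beats c p a y z -> beats c p a x z.
Proof. rewrite !beats_Bk; exact: Bk_T1. Qed.
Lemma beats_T2 c (p a : nat -> nat) x y z : beats c p a x y -> ~~ beats c p a z y -> beats c p a x z.
Proof. rewrite !beats_Bk; exact: Bk_T2. Qed.
Lemma beats_asym c (p a : nat -> nat) x y : beats c p a x y -> ~~ beats c p a y x.
Proof. rewrite !beats_Bk; exact: Bk_asym. Qed.
Lemma beats_self c p a i : beats c p a i i = false.
Proof. by rewrite /beats; case: ifP => [->|->]; rewrite ?ltnn ?ltxx. Qed.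

Lemma beatsE c p a i j : 0 <= c -> (p j < p i)%N -> (0 < p j)%N ->
  beats c p a j i = (c * ((p i)%:R - (p j)%:R) < (p j * a i)%:R - (p i * a j)%:R).
Proof.
move=> c0 pji pj0; rewrite /beats.
have pi0 : (0 < p i)%N by apply: leq_ltn_trans pji.
case: (ltgtP 0 c) c0 => // [cpos|<-] _.
  have d1 : (a j)%:R + c != 0 by rewrite gt_eqF // ltr_wpDl.
  have d2 : (a i)%:R + c != 0 by rewrite gt_eqF // ltr_wpDl.
  have d1p : 0 < (a j)%:R + c by rewrite ltr_wpDl.
  have d2p : 0 < (a i)%:R + c by rewrite ltr_wpDl.
  rewrite (negPf d1) (negPf d2) ltr_pdivrMr // mulrAC ltr_pdivlMr //.
  rewrite -[LHS]subr_gt0 -[RHS]subr_gt0 !natrM; congr (0 < _); ring.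
rewrite !addr0 !pnatr_eq0 mul0r.
case: (a j) => [|aj]; case: (a i) => [|ai] /=.
- by rewrite !muln0 subrr ltxx ltnNge ltnW.
- by rewrite muln0 subr0 ltr0n muln_gt0 pj0.
- by rewrite muln0 sub0r oppr_gt0 ltrn0.
- rewrite ltr_pdivrMr ?ltr0Sn // mulrAC ltr_pdivlMr ?ltr0Sn //.
  rewrite -[LHS]subr_gt0 -[RHS]subr_gt0 !natrM; congr (0 < _); ring.
Qed.

End Beats.


Section Win.
Variable R : realType.
Variables (c : R) (p : nat -> nat) (a : nat -> nat).

Definition winv (b m : nat) :=
  forall i, (i < m)%N -> ((i < b)%N -> beats c p a b i) /\ ((b < i)%N -> ~~ beats c p a i b).

Lemma foldl_inv r : forall b m, (b < m)%N -> winv b m ->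
  let w := foldl (fun b j => if beats c p a j b then j else b) b (iota m r) in
  (w < m + r)%N /\ winv w (m + r).
Proof.
elim: r => [|r IH] b m bm inv /=; first by rewrite addn0.
rewrite -addSnnS; apply: IH.
  by case: ifP => _; [rewrite ltnS | apply: ltn_trans bm _].
case: ifP => hb i; rewrite ltnS leq_eqVlt => /orP [/eqP -> | im].
- by rewrite ltnn.
- split=> [ib|]; last by move=> mi; move: (ltn_trans im mi); rewrite ltnn.
  have [ieb|nib] := eqVneq i b; first by rewrite ieb.
  have [lib|lbi|eib] := ltngtP i b.
  + exact: beats_T1 hb (proj1 (inv i im) lib).
  + exact: beats_T2 hb (proj2 (inv i im) lbi).
  + by move: nib; rewrite eib eqxx.
- split=> [mb|_]; [by move: (ltn_trans bm mb); rewrite ltnn | by rewrite hb].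
- exact: inv.
Qed.

Lemma winner_spec n : (0 < n)%N ->
  (winner c p n a < n)%N /\ winv (winner c p n a) n.
Proof.
case: n => // n _; rewrite /winner /= beats_self.
have := @foldl_inv n 0 1 isT; rewrite add1n; apply.
by move=> i; rewrite ltnS leqn0 => /eqP ->.
Qed.

Lemma winner_max n i : (i < n)%N -> ~~ beats c p a i (winner c p n a).
Proof.
move=> iN; have [wn inv] := winner_spec (leq_ltn_trans (leq0n i) iN).
have [<-|] := eqVneq i (winner c p n a); first by rewrite beats_self.
case: ltngtP => // h _.
  exact: beats_asym (proj1 (inv i iN) h).
exact: (proj2 (inv i iN) h).
Qed.

Lemma winner_lt n : (0 < n)%N -> (winner c p n a < n)%N.
Proof. by move=> /winner_spec []. Qed.

Lemma winner_earlier n i : (i < n)%N -> (i < winner c p n a)%N ->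
  beats c p a (winner c p n a) i.
Proof.
move=> iN; have [_ inv] := winner_spec (leq_ltn_trans (leq0n i) iN).
exact: (proj1 (inv i iN)).
Qed.

Lemma winner_later n i : (i < n)%N -> (winner c p n a < i)%N ->
  ~~ beats c p a i (winner c p n a).
Proof.
move=> iN; have [_ inv] := winner_spec (leq_ltn_trans (leq0n i) iN).
exact: (proj2 (inv i iN)).
Qed.
End Win.

Lemma foldl_agree (R : realType) (c1 c2 : R) p a r : forall b m, (b <= m)%N ->
  (forall i j, (i < j)%N -> (j < m + r)%N -> beats c1 p a j i = beats c2 p a j i) ->
  foldl (fun b j => if beats c1 p a j b then j else b) b (iota m r) =
  foldl (fun b j => if beats c2 p a j b then j else b) b (iota m r).
Proof.
elim: r => [|r IH] b m bm h //=.
have -> : beats c1 p a m b = beats c2 p a m b.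
  move: bm; rewrite leq_eqVlt => /orP [/eqP ->|bm]; first by rewrite !beats_self.
  by apply: h => //; rewrite addnS ltnS leq_addr.
apply: IH; first by case: ifP => _; [exact: leqnSn| exact: leqW].
by move=> i j ij jm; apply: h => //; rewrite -addSnnS.
Qed.

Lemma winner_agree (R : realType) (c1 c2 : R) p a n :
  (forall i j, (i < j)%N -> (j < n)%N -> beats c1 p a j i = beats c2 p a j i) ->
  winner c1 p n a = winner c2 p n a.
Proof. by move=> h; apply: foldl_agree. Qed.


Section Alloc.
Variable R : realType.
Variables (p : nat -> nat) (n : nat).

Lemma allocS (c : R) t i : alloc c p n t.+1 i = (alloc c p n t i + (i == S_seq c p n t))%N.
Proof. by rewrite /= /S_seq; case: eqP; rewrite ?addn1 ?addn0. Qed.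

Lemma alloc_mono (c : R) t t' i : (t <= t')%N -> (alloc c p n t i <= alloc c p n t' i)%N.
Proof.
elim: t' => [|t' IH]; first by rewrite leqn0 => /eqP ->.
rewrite leq_eqVlt => /orP [/eqP -> //| ]; rewrite ltnS => /IH h.
by rewrite allocS; apply: leq_trans h (leq_addr _ _).
Qed.

Lemma alloc_det (c1 c2 : R) : S_seq c1 p n = S_seq c2 p n ->
  forall t i, alloc c1 p n t i = alloc c2 p n t i.
Proof.
move=> hS; elim=> [//|t IH] i; rewrite !allocS IH.
by have -> : S_seq c1 p n t = S_seq c2 p n t by rewrite hS.
Qed.

Lemma seq_agree (c1 c2 : R) :
  (forall a i j, (i < j)%N -> (j < n)%N -> beats c1 p a j i = beats c2 p a j i) ->
  S_seq c1 p n = S_seq c2 p n.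
Proof.
move=> h.
have ha : forall t, alloc c1 p n t = alloc c2 p n t.
  elim=> [//|t IH] /=; rewrite IH (winner_agree (c1:=c1) (c2:=c2)) //.
  by move=> i j; apply: h.
apply: functional_extensionality => t; rewrite /S_seq ha.
by apply: winner_agree => i j; apply: h.
Qed.

Lemma alloc_sum (c : R) t : (0 < n)%N -> (\sum_(j < n) alloc c p n t j)%N = t.
Proof.
move=> n0; elim: t => [|t IH]; first by rewrite big1.
have wn : (S_seq c p n t < n)%N by apply: winner_lt.
under eq_bigr do rewrite allocS.
rewrite big_split /= IH (bigD1 (Ordinal wn)) //= eqxx big1 ?addn0 ?addn1 //.
move=> j hj; apply/eqP; rewrite eqb0; apply: contra hj => /eqP hj.
by apply/eqP; apply: val_inj.
Qed.

Lemma nbeats_bound (c : R) a i w K : 0 <= c -> c <= 1 -> (0 < p i)%N ->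
  (a i <= K)%N -> ~~ beats c p a i w -> (a w <= p w * K.+1)%N.
Proof.
move=> c0 c1 pi0 aiK; rewrite /beats.
have dz : forall x, ((x%:R + c == 0) = (x == 0%N) && (c == 0)).
  move=> x; apply/idP/idP.
    move=> /eqP h; have cz : c = 0 by move: (ler0n R x) => ?; lra.
    by move: h; rewrite cz addr0 => /eqP; rewrite pnatr_eq0 => ->; rewrite eqxx.
  by case/andP => /eqP -> /eqP ->; rewrite addr0.
case: ifP => [_|hi].
  by case: ifP => [|//]; rewrite dz => /andP [/eqP -> _].
case: ifP => [|hw]; first by rewrite dz => /andP [/eqP -> _].
have dip : 0 < (a i)%:R + c by rewrite lt_neqAle eq_sym hi addr_ge0.
have dwp : 0 < (a w)%:R + c by rewrite lt_neqAle eq_sym hw addr_ge0.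
rewrite -leNgt ler_pdivrMr // mulrAC ler_pdivlMr // => h.
rewrite -(ler_nat R) natrM.
have hK : (a i)%:R <= K%:R :> R by rewrite ler_nat.
have hpi : 1 <= (p i)%:R :> R by rewrite ler1n.
have hpw : 0 <= (p w)%:R :> R by [].
have haw : 0 <= (a w)%:R :> R by [].
rewrite -natr1; nra.
Qed.

End Alloc.


Section Unb.
Variable R : realType.
Variables (p : nat -> nat) (n : nat).
Hypothesis hpos : forall i, (i < n)%N -> (0 < p i)%N.

Lemma unbounded (c : R) i K : 0 <= c -> c <= 1 -> (i < n)%N ->
  exists t, (K < alloc c p n t i)%N.
Proof.
move=> c0 c1 iN.
have n0 : (0 < n)%N by apply: leq_ltn_trans iN.
pose P := (\sum_(j < n) p j)%N.
pose B := (P * K.+1).+1.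
exists (n * B).+1; rewrite ltnNge; apply/negP => hT.
have hK : forall t, (t <= (n * B).+1)%N -> (alloc c p n t i <= K)%N.
  move=> t tT; apply: leq_trans hT; exact: alloc_mono.
have hB : forall t, (t <= (n * B).+1)%N -> forall j, (j < n)%N -> (alloc c p n t j <= B)%N.
  elim=> [|t IH] tT j jn; first by [].
  rewrite allocS; case: eqP => [ew|_]; last by rewrite addn0 IH // ltnW.
  rewrite addn1 ltnS.
  have wn : (S_seq c p n t < n)%N by apply: winner_lt.
  have h := nbeats_bound c0 c1 (hpos iN)
     (hK t (ltnW tT)) (winner_max c p (alloc c p n t) iN).
  rewrite ew; apply: leq_trans h _; rewrite leq_mul2r /=.
  by rewrite /P (bigD1 (Ordinal wn)) //= leq_addr.
have := @alloc_sum R p n c (n * B).+1 n0.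
have : (\sum_(j < n) alloc c p n (n * B).+1 j <= \sum_(j < n) B)%N.
  by apply: leq_sum => j _; apply: hB.
rewrite sum_nat_const card_ord => h1 h2.
by move: h1; rewrite h2 ltnn.
Qed.

Lemma first_time (c : R) i K t : (K < alloc c p n t i)%N ->
  exists t', [/\ alloc c p n t' i = K, S_seq c p n t' = i & (t' < t)%N].
Proof.
elim: t => [|t IH] //; rewrite allocS.
case: (ltnP K (alloc c p n t i)) => hk.
  by have [t' [? ? ?]] := IH hk; exists t'; split => //; apply: ltnW.
case: eqP => [ei|_]; last by rewrite addn0 => h; lia.
rewrite addn1 => h; exists t; split => //; lia.
Qed.
End Unb.


Section Differ.
Variable R : realType.
Variables (p : nat -> nat) (n : nat).
Hypothesis hpos : forall i, (i < n)%N -> (0 < p i)%N.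
Hypothesis hdec : forall i j, (i < j)%N -> (j < n)%N -> (p j < p i)%N.

Lemma seq_differ (c1 c2 : R) i j k l : 0 <= c1 -> c1 <= 1 -> 0 <= c2 -> c2 <= 1 ->
  (i < j)%N -> (j < n)%N ->
  c1 * ((p i)%:R - (p j)%:R) < (p j * k)%:R - (p i * l)%:R ->
  ~~ (c2 * ((p i)%:R - (p j)%:R) < (p j * k)%:R - (p i * l)%:R) ->
  S_seq c1 p n <> S_seq c2 p n.
Proof.
move=> c10 c11 c20 c21 ij jn h1 h2 hS.
have iN : (i < n)%N by apply: ltn_trans jn.
have pji := hdec ij jn; have pj0 := hpos jn; have pi0 := hpos iN.
have [t1 tt1] := unbounded hpos k c10 c11 iN.
have [ti [ai Si _]] := first_time tt1.
have [t2 tt2] := unbounded hpos l c10 c11 jn.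
have [tj [aj Sj _]] := first_time tt2.
have hA := alloc_det hS.
have h3 := @winner_later R c1 p (alloc c1 p n ti) n j jn.
rewrite -/(S_seq c1 p n ti) Si in h3.
have := h3 ij; rewrite beatsE // ai => h4.
have lt1 : (l < alloc c1 p n ti j)%N.
  have : (p i * l < p i * alloc c1 p n ti j)%N.
    rewrite -(ltr_nat R); rewrite -leNgt in h4; lra.
  by rewrite ltn_pmul2l.
have Sj2 : S_seq c2 p n tj = j by rewrite -hS.
have h5 := @winner_earlier R c2 p (alloc c2 p n tj) n i iN.
rewrite -/(S_seq c2 p n tj) Sj2 in h5.
have := h5 ij; rewrite beatsE // -!hA aj => h6.
have lt2 : (k < alloc c1 p n tj i)%N.
  have : (p j * k < p j * alloc c1 p n tj i)%N.
    rewrite -(ltr_nat R); rewrite -leNgt in h2; lra.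
  by rewrite ltn_pmul2l.
have e1 : (tj < ti)%N.
  rewrite ltnNge; apply/negP => /(alloc_mono p n c1 j); rewrite aj => h.
  by move: (leq_trans lt1 h); rewrite ltnn.
have e2 : (ti < tj)%N.
  rewrite ltnNge; apply/negP => /(alloc_mono p n c1 i); rewrite ai => h.
  by move: (leq_trans lt2 h); rewrite ltnn.
by move: (ltn_trans e1 e2); rewrite ltnn.
Qed.
End Differ.


Lemma mem_pairs n ij : (ij \in pairs n) = (ij.1 < ij.2)%N && (ij.2 < n)%N.
Proof.
case: ij => i j /=; rewrite /pairs mem_filter /=.
apply/idP/idP.
  case/andP => ij /allpairsP [[x y] /= [hx hy e]].
  by case: e ij hy => -> -> ij; rewrite mem_iota /= ij.

case/andP => ij jn; rewrite ij /=; apply/allpairsP; exists (i, j).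
by rewrite /= !mem_iota /= jn (ltn_trans ij jn).
Qed.

Lemma count_gt_iota i n : count (fun j => (i < j)%N) (iota 0 n) = (n - i.+1)%N.
Proof.
elim: n => [|n IH] //; rewrite -[n.+1]addn1 iotaD count_cat IH /=; lia.
Qed.

Lemma size_pairs n : size (pairs n) = 'C(n, 2).
Proof.
rewrite /pairs size_filter /allpairs count_flatten -map_comp.
under eq_map => i /= do rewrite count_map /=.
have -> : [seq count (preim (pair i) (fun ij : nat * nat => (ij.1 < ij.2)%N)) (iota 0 n) | i <- iota 0 n]
   = [seq (n - i.+1)%N | i <- iota 0 n].
  by apply: eq_map => i; rewrite -(count_gt_iota i n).
rewrite sumnE big_map -bin2_sum -{1}(subn0 n) -/(index_iota 0 n) big_nat_rev /=.
rewrite big_nat_cond [RHS]big_nat_cond; apply: eq_bigr => i /andP [/andP [_ h] _]; lia.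
Qed.

Lemma nth_pairs n kk : (kk < 'C(n, 2))%N ->
  let ij := nth (0%N, 0%N) (pairs n) kk in (ij.1 < ij.2)%N /\ (ij.2 < n)%N.
Proof.
move=> h /=; have : nth (0%N, 0%N) (pairs n) kk \in pairs n.
  by apply: mem_nth; rewrite size_pairs.
by rewrite mem_pairs => /andP.
Qed.

Lemma index_pairs n i j : (i < j)%N -> (j < n)%N ->
  exists2 kk, (kk < 'C(n, 2))%N & nth (0%N, 0%N) (pairs n) kk = (i, j).
Proof.
move=> ij jn; have hm : (i, j) \in pairs n by rewrite mem_pairs /= ij jn.
exists (index (i, j) (pairs n)); first by rewrite -size_pairs index_mem.
exact: nth_index.
Qed.

Section NT.
Variables a b : nat.
Hypothesis ab : (b < a)%N.
Hypothesis b0 : (0 < b)%N.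

Definition gg := gcdn a b.
Definition xx := (a %/ gg)%N.
Definition yy := (b %/ gg)%N.

Lemma gg_pos : (0 < gg)%N.
Proof. by rewrite /gg gcdn_gt0 b0 orbT. Qed.
Lemma xxE : a = (xx * gg)%N.
Proof. by rewrite /xx divnK // /gg dvdn_gcdl. Qed.
Lemma yyE : b = (yy * gg)%N.
Proof. by rewrite /yy divnK // /gg dvdn_gcdr. Qed.
Lemma yy_pos : (0 < yy)%N.
Proof. by move: b0; rewrite yyE muln_gt0 => /andP []. Qed.
Lemma yx : (yy < xx)%N.
Proof. by move: ab; rewrite {1}xxE {1}yyE ltn_pmul2r // gg_pos. Qed.
Lemma xy_cop : coprime yy xx.
Proof.
rewrite /coprime; have g0 := gg_pos.
have : (gcdn yy xx * gg = gg)%N by rewrite muln_gcdl -yyE -xxE /gg gcdnC.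
by rewrite -{2}[gg]mul1n => /eqP; rewrite eqn_pmul2r.
Qed.
Lemma mkE : ((a - b) %/ gg)%N = (xx - yy)%N.
Proof. by rewrite {1}xxE {1}yyE -mulnBl mulnK // gg_pos. Qed.
End NT.

Lemma mem_A_union p n q : q \in A_union p n <->
  exists kk, (kk < 'C(n, 2))%N /\ exists s, (s < mk p n kk)%N /\
     q = s%:R / (mk p n kk)%:R.
Proof.
rewrite /A_union mem_undup; split.
  move=> /flatten_mapP [kk]; rewrite mem_iota /= => hk /mapP [s]; rewrite mem_iota /= => hs ->.
  by exists kk; split => //; exists s.
move=> [kk [hk [s [hs ->]]]]; apply/flatten_mapP; exists kk; first by rewrite mem_iota.
by apply/mapP; exists s; rewrite // mem_iota.
Qed.


Section Crit.
Variable R : realType.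
Variables (p : nat -> nat) (n : nat).
Hypothesis hpos : forall i, (i < n)%N -> (0 < p i)%N.
Hypothesis hdec : forall i j, (i < j)%N -> (j < n)%N -> (p j < p i)%N.

Definition crit (c : R) := exists i j k l, [/\ (i < j)%N, (j < n)%N &
  c * ((p i)%:R - (p j)%:R) = (p j * k)%:R - (p i * l)%:R].

Definition Bl : seq R := [seq ratr (1 - q) | q <- A_union p n].

Lemma ratrE (s m : nat) : ratr (1 - s%:R / m%:R) = 1 - s%:R / m%:R :> R.
Proof. by rewrite rmorphB rmorph1 fmorph_div !rmorph_nat. Qed.

Lemma B_crit b : b \in Bl -> crit b /\ 0 < b <= 1.
Proof.
move=> /mapP [q /mem_A_union [kk [hk [s [hs ->]]]] ->].
have [ij jn] := nth_pairs hk.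
move: hs; rewrite /mk.
case: (nth (0%N, 0%N) (pairs n) kk) ij jn => i j /= ij jn.
have pji := hdec ij jn; have pj0 := hpos jn.
rewrite mkE // => hs.
set X := xx (p i) (p j); set Y := yy (p i) (p j); set G := gg (p i) (p j).
have yx : (Y < X)%N by apply: yx.
have y0 : (0 < Y)%N by apply: yy_pos.
have g0 : (0 < G)%N by apply: gg_pos.
have cop : coprime Y X by apply: xy_cop.
set m := (X - Y)%N.
have m0 : (0 < m)%N by rewrite subn_gt0.
rewrite ratrE; split; last first.
  have hm : 0 < m%:R :> R by rewrite ltr0n.
  have hsm : s%:R < m%:R :> R by rewrite ltr_nat.
  rewrite subr_gt0 ltr_pdivrMr // mul1r hsm /= lerBlDr lerDl divr_ge0 //.
case: (egcdnP X y0) => km kn e _.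
move: cop; rewrite /coprime => /eqP ec; rewrite ec in e.
pose r := (m - s)%N.
exists i, j, (km * r)%N, (kn * r)%N; split => //.
have pi : (p i)%:R = X%:R * G%:R :> R by rewrite {1}(@xxE (p i) (p j)) natrM.
have pj : (p j)%:R = Y%:R * G%:R :> R by rewrite {1}(@yyE (p i) (p j)) natrM.
rewrite !natrM pi pj.
have e' : km%:R * Y%:R = kn%:R * X%:R + 1 :> R by rewrite -!natrM e natrD.
have em : m%:R = X%:R - Y%:R :> R by rewrite natrB // ltnW.
have er : r%:R = m%:R - s%:R :> R by rewrite natrB // ltnW.
have mz : m%:R != 0 :> R by rewrite pnatr_eq0 -lt0n.
rewrite er.
have -> : Y%:R * G%:R * (km%:R * (m%:R - s%:R)) - X%:R * G%:R * (kn%:R * (m%:R - s%:R))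
   = G%:R * (m%:R - s%:R) * (km%:R * Y%:R) - G%:R * (m%:R - s%:R) * (kn%:R * X%:R) :> R by ring.
rewrite e' -[X%:R * G%:R - Y%:R * G%:R](_ : m%:R * G%:R = _); last by rewrite em; ring.
by field.
Qed.

Lemma crit_B (t : R) : 0 < t -> t <= 1 -> crit t -> t \in Bl.
Proof.
move=> t0 t1 [i [j [k [l [ij jn ht]]]]].
have pji := hdec ij jn; have pj0 := hpos jn.
have [kk hk ek] := index_pairs ij jn.
set X := xx (p i) (p j); set Y := yy (p i) (p j); set G := gg (p i) (p j).
have yx : (Y < X)%N by apply: yx.
have g0 : (0 < G)%N by apply: gg_pos.
set m := (X - Y)%N.
have m0 : (0 < m)%N by rewrite subn_gt0.
have mkk : mk p n kk = m by rewrite /mk ek /= mkE.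
have pi : (p i)%:R = X%:R * G%:R :> R by rewrite {1}(@xxE (p i) (p j)) natrM.
have pj : (p j)%:R = Y%:R * G%:R :> R by rewrite {1}(@yyE (p i) (p j)) natrM.
have em : m%:R = X%:R - Y%:R :> R by rewrite natrB // ltnW.
have Gp : 0 < G%:R :> R by rewrite ltr0n.
have mp : 0 < m%:R :> R by rewrite ltr0n.
move: ht; rewrite !natrM pi pj => ht.
have hD : t * (m%:R * G%:R) = G%:R * (Y%:R * k%:R - X%:R * l%:R).
  rewrite em; have -> : t * ((X%:R - Y%:R) * G%:R) = t * (X%:R * G%:R - Y%:R * G%:R) by ring.
  rewrite ht; ring.
have lt1 : (X * l < Y * k)%N.
  rewrite -(ltr_nat R) !natrM.
  have : 0 < G%:R * (Y%:R * k%:R - X%:R * l%:R) :> R by rewrite -hD; apply: mulr_gt0 => //; apply: mulr_gt0.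
  by rewrite pmulr_rgt0 // subr_gt0.
pose r := (Y * k - X * l)%N.
have er : r%:R = Y%:R * k%:R - X%:R * l%:R :> R by rewrite (natrB _ (ltnW lt1)) !natrM.
have rm : (r <= m)%N.
  rewrite -(ler_nat R) er.
  have : G%:R * (Y%:R * k%:R - X%:R * l%:R) <= m%:R * G%:R :> R.
    by rewrite -hD ger_pMl // mulr_gt0.
  by rewrite mulrC ler_pM2r.
apply/mapP; exists ((m - r)%:R / m%:R).
  apply/mem_A_union; exists kk; split => //; exists (m - r)%N; rewrite mkk; split => //.
  by rewrite ltn_subrL m0 andbT subn_gt0.
rewrite ratrE natrB // er.
have -> : t = t * (m%:R * G%:R) / (m%:R * G%:R).
  by rewrite mulfK // mulf_neq0 // gt_eqF.
rewrite hD; field; apply/andP; split; rewrite gt_eqF //.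
Qed.

End Crit.


Section SeqEq.
Variable R : realType.
Variables (p : nat -> nat) (n : nat).
Hypothesis hpos : forall i, (i < n)%N -> (0 < p i)%N.
Hypothesis hdec : forall i j, (i < j)%N -> (j < n)%N -> (p j < p i)%N.

Lemma seq_eq_iff (c1 c2 : R) : 0 <= c1 -> c1 <= c2 -> c2 <= 1 ->
  (S_seq c1 p n = S_seq c2 p n <-> ~~ has (fun b => (c1 < b) && (b <= c2)) (Bl R p n)).
Proof.
move=> c10 c12 c21; split.
  move=> hS; apply/hasPn => b /(B_crit hpos hdec) [[i [j [k [l [ij jn hb]]]]] _].
  apply/negP => /andP [h1 h2].
  have pji := hdec ij jn.
  have Mp : 0 < (p i)%:R - (p j)%:R :> R by rewrite subr_gt0 ltr_nat.
  apply: (seq_differ hpos hdec (c1 := c1) (c2 := c2) (k := k) (l := l) _ _ _ _ ij jn _ _ hS).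
  - by [].
  - lra.
  - lra.
  - by [].
  - by rewrite -hb ltr_pM2r.
  - by rewrite -hb -leNgt ler_pM2r.
move=> /hasPn hn; apply: seq_agree => a i j ij jn.
have pji := hdec ij jn; have pj0 := hpos jn.
have Mp : 0 < (p i)%:R - (p j)%:R :> R by rewrite subr_gt0 ltr_nat.
rewrite !beatsE //; try lra.
set M := (p i)%:R - (p j)%:R; set D := _ - _.
apply/idP/idP => h; last first.
  by apply: le_lt_trans h; rewrite ler_pM2r.
rewrite ltNge; apply/negP => h2.
have tc : crit p n (D / M).
  by exists i, j, (a i), (a j); split => //; rewrite divfK // gt_eqF.
have h1' : c1 < D / M by rewrite ltr_pdivlMr.
have h2' : D / M <= c2 by rewrite ler_pdivrMr.
have := hn (D / M) (crit_B hpos hdec (le_lt_trans c10 h1') (le_trans h2' c21) tc).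
by rewrite h1' h2'.
Qed.
End SeqEq.


Section Count.
Variable R : realType.

Lemma cnt_nth (s : seq R) r : sorted <%O s -> (r < size s)%N ->
  count (fun b => b <= nth 0 s r) s = r.+1.
Proof.
elim: s r => [//|x s IH] r /= hs hr.
have hall : all (fun y => x < y) s by apply: order_path_min hs; exact: lt_trans.
have ss : sorted <%O s by apply: path_sorted hs.
case: r hr => [_|r hr] /=.
  rewrite lexx /=; congr _.+1; apply/eqP; rewrite -leqn0 leqNgt -has_count.
  by apply/hasPn => y /(allP hall) hy; rewrite leNgt hy.
rewrite IH //.
have /(allP hall) : nth 0 s r \in s by apply: mem_nth.
by move=> /ltW ->.
Qed.

Lemma count_split (s : seq R) c1 c2 : c1 <= c2 ->
  count (fun b => b <= c2) s = addn (count (fun b => b <= c1) s)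
     (count (fun b => (c1 < b) && (b <= c2)) s).
Proof.
move=> c12; rewrite -count_predUI.
have -> : count (predI (fun b : R => b <= c1) (fun b : R => (c1 < b) && (b <= c2))) s = 0%N.
  apply/eqP; rewrite -leqn0 leqNgt -has_count; apply/hasPn => b _ /=.
  by apply/negP => /andP [h1 /andP [h2 _]]; move: (le_lt_trans h1 h2); rewrite ltxx.
rewrite addn0; apply: eq_count => b /=.
case: (leP b c1) => h /=; first by rewrite (le_trans h c12).
by [].
Qed.

Variable T : Type.
Variable Sf : R -> T.
Variable Bs : seq R.
Hypothesis uB : uniq Bs.
Hypothesis rB : forall b, b \in Bs -> 0 < b <= 1.
Hypothesis hS : forall c1 c2, 0 <= c1 -> c1 <= c2 -> c2 <= 1 ->
  (Sf c1 = Sf c2 <-> ~~ has (fun b => (c1 < b) && (b <= c2)) Bs).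

Definition gcnt c := count (fun b => b <= c) Bs.

Lemma gcnt_iff c1 c2 : 0 <= c1 <= 1 -> 0 <= c2 <= 1 -> (Sf c1 = Sf c2 <-> gcnt c1 = gcnt c2).
Proof.
move=> /andP [h10 h11] /andP [h20 h21].
wlog c12 : c1 c2 h10 h11 h20 h21 / c1 <= c2.
  move=> W; case: (leP c1 c2) => h; first exact: W.
  have := W c2 c1 h20 h21 h10 h11 (ltW h); case=> a b; split => e.
  - by rewrite (a (esym e)).
  - by rewrite (b (esym e)).
rewrite hS // /gcnt (count_split _ c12) has_count -leqNgt leqn0.
split => [/eqP ->|/eqP]; first by rewrite addn0.
by rewrite -{1}[count _ _]addn0 eqn_add2l eq_sym.
Qed.

Let bs := sort <=%O Bs.
Definition wpt (r : nat) : R := if r is r'.+1 then nth 0 bs r' else 0.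

Lemma bs_sorted : sorted <%O bs.
Proof. by rewrite sort_lt_sorted. Qed.
Lemma size_bs : size bs = size Bs.
Proof. by rewrite size_sort. Qed.
Lemma mem_bs x : (x \in bs) = (x \in Bs).
Proof. by rewrite mem_sort. Qed.

Lemma wpt_range r : (r <= size Bs)%N -> 0 <= wpt r <= 1.
Proof.
case: r => [|r] hr /=; first by rewrite lexx ler01.
have : nth 0 bs r \in Bs by rewrite -mem_bs mem_nth // size_bs.
by move=> /rB /andP [h1 h2]; rewrite h2 ltW.
Qed.

Lemma gcnt_wpt r : (r <= size Bs)%N -> gcnt (wpt r) = r.
Proof.
rewrite /gcnt; case: r => [|r] hr /=.
  apply/eqP; rewrite -leqn0 leqNgt -has_count; apply/hasPn => b /rB /andP [h _].
  by rewrite -ltNge.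
have ps : perm_eq bs Bs by rewrite /bs perm_sort.
rewrite -(permP ps) cnt_nth //; first exact: bs_sorted.
by rewrite size_bs.
Qed.

Lemma count_card : has_card (fun s => exists c : R, 0 <= c <= 1 /\ s = Sf c) (1 + size Bs).
Proof.
exists (fun r : 'I_(1 + size Bs) => Sf (wpt r)); split.
  move=> r1 r2 e; apply: ord_inj.
  have h1 : (r1 <= size Bs)%N by rewrite -ltnS -add1n ltn_ord.
  have h2 : (r2 <= size Bs)%N by rewrite -ltnS -add1n ltn_ord.
  rewrite -(gcnt_wpt h1) -(gcnt_wpt h2); apply/gcnt_iff => //; exact: wpt_range.
move=> s; split.
  move=> [c [hc ->]].
  have hg : (gcnt c < 1 + size Bs)%N by rewrite add1n ltnS count_size.
  exists (Ordinal hg); apply/gcnt_iff => //=.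
  - by apply: wpt_range; rewrite /gcnt count_size.
  - by rewrite gcnt_wpt // /gcnt count_size.
move=> [r <-]; exists (wpt r); split => //; apply: wpt_range.
by rewrite -ltnS -add1n ltn_ord.
Qed.
End Count.


Lemma Posz_sum (T : Type) (r : seq T) (F : T -> nat) :
  ((\sum_(x <- r) F x)%N)%:Z = \sum_(x <- r) (F x)%:Z.
Proof. by elim: r => [|x r IH]; rewrite ?big_nil // !big_cons PoszD IH. Qed.

Lemma expand_prod K (f : 'I_K -> int) :
  \prod_(k < K) (1 - f k) = \sum_(T : {set 'I_K}) (-1) ^+ #|T| * \prod_(k in T) f k.
Proof.
have -> : \prod_(k < K) (1 - f k) = \prod_(k < K) (- f k + 1).
  by apply: eq_bigr => k _; rewrite addrC.
rewrite bigA_distr; apply: eq_bigr => T _.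
by rewrite -big_mkcond /= prodrN.
Qed.

Definition Alist (m : nat) : seq rat := [seq (r%:R / m%:R : rat) | r <- iota 0 m].

Definition isint (x : rat) (m : nat) := exists z : int, x * m%:R = z%:~R.

Lemma mem_Alist m x : (0 < m)%N ->
  (x \in Alist m) <-> (0 <= x < 1 /\ isint x m).
Proof.
move=> m0; have mp : 0 < m%:R :> rat by rewrite ltr0n.
split.
  rewrite /Alist => /mapP [r]; rewrite mem_iota /= add0n => rm ->; split.
    by rewrite divr_ge0 //= ltr_pdivrMr // mul1r ltr_nat rm.
  by exists r; rewrite divfK ?gt_eqF.
move=> [/andP [x0 x1] [z hz]].
have z0 : 0 <= z by rewrite -(ler_int rat) -hz mulr_ge0.
have zm : z < m%:Z.
  rewrite -(ltr_int rat) -hz; have -> : (m%:Z)%:~R = m%:R :> rat by [].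
  by rewrite -ltr_pdivlMr // divff ?gt_eqF.
rewrite /Alist; apply/mapP; exists `|z|%N; first by rewrite mem_iota /= add0n; lia.
have mz : m%:R != 0 :> rat by rewrite gt_eqF.
rewrite -[x](mulfK mz) hz; congr (_ / _).
by rewrite -[in LHS](gez0_abs z0).
Qed.

Lemma isint0 x : isint x 0.
Proof. by exists 0; rewrite mulr0. Qed.

Lemma isint_dvd x a b : (a %| b)%N -> isint x a -> isint x b.
Proof.
move=> /dvdnP [d ->] [z hz]; exists (d%:Z * z).
by rewrite natrM mulrCA hz intrM.
Qed.

Lemma isint_gcd x a b : isint x a -> isint x b -> isint x (gcdn a b).
Proof.
case: a => [|a]; first by rewrite gcd0n.
move=> [za ha] [zb hb].
case: (egcdnP b (ltn0Sn a)) => km kn e _.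
exists (km%:Z * za - kn%:Z * zb).
have -> : (gcdn a.+1 b)%:R = (km * a.+1)%:R - (kn * b)%:R :> rat.
  by rewrite e natrD addrAC subrr add0r.
rewrite !natrM mulrBr !mulrA ![x * _%:R]mulrC -!mulrA ha hb.
rewrite rmorphB /= !rmorphM /=; done.
Qed.

Lemma isint_big (I : finType) (P : pred I) (F : I -> nat) x :
  (forall i, P i -> isint x (F i)) -> isint x (\big[gcdn/0%N]_(i | P i) F i).
Proof.
move=> h; apply: (big_ind (isint x)); [exact: isint0 | exact: isint_gcd | exact: h].
Qed.

Lemma prod_bool (I : finType) (A : {set I}) (b : I -> bool) :
  \prod_(k in A) ((b k)%:R : int) = ([forall k in A, b k])%:R.
Proof.
case: (boolP [forall k in A, b k]) => h.
  by apply: big1 => k kA; move/forallP: h => /(_ k); rewrite kA /= => ->.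
move/forallPn: h => [k]; rewrite negb_imply => /andP [kA bk].
by rewrite (bigD1 k) //= (negPf bk) mul0r.
Qed.

Lemma sum_bool (T : Type) (r : seq T) (P : pred T) :
  \sum_(x <- r) ((P x)%:R : int) = (count P r)%:R.
Proof.
elim: r => [|x r IH]; first by rewrite big_nil.
by rewrite big_cons IH /= natrD.
Qed.

Lemma incl_excl_pt K (f : 'I_K -> bool) (k0 : 'I_K) : f k0 ->
  \sum_(T : {set 'I_K} | T != set0) (-1) ^+ #|T|.+1 * \prod_(k in T) ((f k)%:R : int) = 1.
Proof.
move=> fk0.
have h0 : \prod_(k < K) (1 - ((f k)%:R : int)) = 0.
  by rewrite (bigD1 k0) //= fk0 subrr mul0r.
rewrite expand_prod (bigD1 set0) //= cards0 expr0 mul1r big_set0 in h0.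
have e : \sum_(T : {set 'I_K} | T != set0) (-1) ^+ #|T| * \prod_(k in T) ((f k)%:R : int) = -1.
  by apply/eqP; rewrite -addr_eq0 addrC; apply/eqP.
under eq_bigr do rewrite exprS mulN1r mulNr.
by rewrite sumrN e opprK.
Qed.


Section IE.
Variables (p : nat -> nat) (n : nat).
Hypothesis hpos : forall i, (i < n)%N -> (0 < p i)%N.
Hypothesis hdec : forall i j, (i < j)%N -> (j < n)%N -> (p j < p i)%N.

Lemma mk_pos kk : (kk < 'C(n, 2))%N -> (0 < mk p n kk)%N.
Proof.
move=> hk; have [ij jn] := nth_pairs hk.
rewrite /mk; move: ij jn; case: (nth _ _ _) => i j /= ij jn.
have pji := hdec ij jn; have pj0 := hpos jn.
by rewrite mkE // subn_gt0 yx.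
Qed.

Lemma Alist_uniq m : uniq (Alist m).
Proof.
case: m => [//|m]; rewrite map_inj_uniq ?iota_uniq // => r1 r2 /=.
move=> e; have hm : (m.+1%:R : rat)^-1 != 0 by rewrite invr_eq0 pnatr_eq0.
by apply/eqP; rewrite -(eqr_nat rat); apply/eqP; apply: (mulIf hm e).
Qed.

Lemma count_inter (T : {set 'I_('C(n, 2))}) : T != set0 ->
  count (fun x => [forall k in T, x \in Ak p n k]) (A_union p n) =
  \big[gcdn/0%N]_(k in T) mk p n k.
Proof.
move=> /set0Pn [k0 k0T].
set g := \big[gcdn/0%N]_(k in T) mk p n k.
have gd : forall k, k \in T -> (g %| mk p n k)%N.
  by move=> k kT; apply: (biggcdn_inf k kT); exact: dvdnn.
have mk0 := mk_pos (ltn_ord k0).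
have g0 : (0 < g)%N.
  rewrite lt0n; apply/negP => /eqP g0; move: (gd k0 k0T); rewrite g0 dvd0n => /eqP h.
  by move: mk0; rewrite h.
have eqv : forall x, [forall k in T, x \in Ak p n k] = (x \in Alist g).
  move=> x; apply/idP/idP.
    move=> /forallP h.
    have h' : forall k, k \in T -> 0 <= x < 1 /\ isint x (mk p n k).
      by move=> k kT; move: (h k); rewrite kT /= => /(mem_Alist _ (mk_pos (ltn_ord k))).
    apply/(mem_Alist _ g0); split; first by case: (h' k0 k0T).
    by apply: isint_big => k kT; case: (h' k kT).
  move=> /(mem_Alist _ g0) [hx hi]; apply/forallP => k; apply/implyP => kT.
  apply/(mem_Alist _ (mk_pos (ltn_ord k))); split => //.
  exact: isint_dvd (gd k kT) hi.
rewrite -size_filter.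
have -> : size (filter (fun x => [forall k in T, x \in Ak p n k]) (A_union p n)) = size (Alist g).
  apply: perm_size; apply: uniq_perm.
  - by apply: filter_uniq; apply: undup_uniq.
  - exact: Alist_uniq.
  move=> x; rewrite mem_filter eqv; apply/andP/idP => [[] //|hx]; split => //.
  apply/mem_A_union; exists k0; split; first exact: ltn_ord.
  move: hx; rewrite -eqv => /forallP /(_ k0); rewrite k0T /= => /mapP [s].
  by rewrite mem_iota /= add0n => hs ->; exists s.
by rewrite size_map size_iota.
Qed.

Lemma part2 :
  (1 + size (A_union p n))%N%:Z =
     1 + \sum_(T : {set 'I_('C(n, 2))} | T != set0)
           (-1) ^+ (#|T|.+1) * ((\big[gcdn/0%N]_(k in T) mk p n k)%:Z).
Proof.
rewrite PoszD; congr (_ + _).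
rewrite -sum1_size Posz_sum.
transitivity (\sum_(x <- A_union p n) \sum_(T : {set 'I_('C(n, 2))} | T != set0)
   (-1) ^+ #|T|.+1 * \prod_(k in T) (((x \in Ak p n k) : nat)%:R : int)).
  rewrite big_seq_cond [RHS]big_seq_cond; apply: eq_bigr => x /andP [hx _].
  have [kk [hk hxk]] : exists kk, (kk < 'C(n, 2))%N /\ x \in Ak p n kk.
    move/mem_A_union: hx => [kk [hk [s [hs ->]]]]; exists kk; split => //.
    by apply/mapP; exists s; rewrite // mem_iota.
  by symmetry; exact: (incl_excl_pt (f := fun k : 'I_('C(n, 2)) => x \in Ak p n k) (k0 := Ordinal hk) hxk).
rewrite exchange_big /=; apply: eq_bigr => T hT; rewrite -mulr_sumr; congr (_ * _).
have -> : \sum_(i <- A_union p n) \prod_(k in T) (((i \in Ak p n k) : nat)%:R : int) =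
   \sum_(i <- A_union p n) ((([forall k in T, i \in Ak p n k]) : nat)%:R : int).
  by apply: eq_bigr => i _; exact: prod_bool.
rewrite (sum_bool _ (fun x => [forall k in T, x \in Ak p n k])) count_inter // natz.
done.
Qed.
End IE.

Unset Implicit Arguments.

Theorem mainTheorem18 (R : realType) (n : nat) (p : nat -> nat)
  (hpos : forall i, (i < n)%N -> (0 < p i)%N)
  (hdec : forall i j, (i < j)%N -> (j < n)%N -> (p j < p i)%N) :
  has_card (fun s : nat -> nat =>
              exists c : R, 0 <= c <= 1 /\ s = S_seq c p n)
           (1 + size (A_union p n))%N
  /\
  ((1 + size (A_union p n))%N%:Z =
     1 + \sum_(T : {set 'I_('C(n, 2))} | T != set0)
           (-1) ^+ (#|T|.+1) * ((\big[gcdn/0%N]_(k in T) mk p n k)%:Z)).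
Proof.
split; last exact: part2.
have uB : uniq (Bl R p n).
  rewrite map_inj_uniq ?undup_uniq // => q1 q2 e.
  have : 1 - q1 = 1 - q2.
    by apply/le_anti; rewrite -!(ler_rat R) e lexx.
  by move/addrI/oppr_inj.
have rB : forall b, b \in Bl R p n -> 0 < b <= 1.
  by move=> b /(B_crit hpos hdec) [].
have hS := @seq_eq_iff R p n hpos hdec.
have := count_card (Sf := fun c : R => S_seq c p n) uB rB hS.
by rewrite size_map.
Qed.
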